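(* Let $(M^n,c,v^m d\nu)$ be a smooth conformal measure space with characteristic constant $\mu$, $n\ge3$, $m\in\mathbb{R}\setminus\{-n,1-n,2-n\}$. For every $w\in\mathbb{R}$ and $\sigma\in\mathcal{E}[w]$, $$(n+2w-2)\mathbb{D}^W\sigma-(m+n+2w-2)\mathbb{D}\sigma=-mv^{-1}\Big\langle\mathbb{D}\sigma,\ J+\frac{\mu-(m-1)|J|^2}{2(m+n-1)v}X\Big\rangle X.$$ In particular, $\mathbb{D}^W$ is a well-defined operator $\mathcal{E}[w]\to\mathcal{T}[w-1]$ (independent of the choice of scale).
   Context: Conformal setting: $(M^n,c)$ a manifold with a conformal class of Riemannian metrics. $\mathcal{E}[w]$: conformal densities of weight $w$ (functions in a scale $g\in c$, multiplied by $e^{ws}$ under $g\mapsto e^{2s}g$). Standard tractor bundle $\mathbb{T}$: in a scale $\mathbb{T}\cong\mathbb{R}\oplus TM\oplus\mathbb{R}$, tractor $I$ with top $\sigma$, middle $\omega$, bottom $\rho$, transforming as $\sigma\mapsto e^{s}\sigma$, $\omega\mapsto e^{-s}(\omega+\sigma\nabla s)$, $\rho\mapsto e^{-s}(\rho-g(\nabla s,\omega)-\tfrac12|\nabla s|^2\sigma)$; $\mathcal{T}[w]$ denotes weight-$w$ tractor sections. Tractor metric $\langle I,I\rangle=2\sigma\rho+|\omega|_g^2$. $X\in\mathcal{T}[1]$: top and middle $0$, bottom $1$. Schouten $P=\frac1{n-2}(\mathrm{Ric}-\mathrm{J}g)$, $\mathrm{J}=\operatorname{tr}P$. Tractor-$D$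 $\mathbb{D}:\mathcal{E}[w]\to\mathcal{T}[w-1]$: top $w(n+2w-2)u$, middle $(n+2w-2)\nabla u$, bottom $-(\Delta u+w\mathrm{J}u)$ (scale-independent). SCMS: positive $v\in\mathcal{E}[1]$, $m\in\mathbb{R}$, fixed constant $\mu$; in a scale $v$ is a positive function. $\Delta_\phi u=\Delta u+mv^{-1}g(\nabla v,\nabla u)$, $R^m_\phi=R-2mv^{-1}\Delta v-m(m-1)v^{-2}|\nabla v|^2$, $\mathrm{J}^W=\frac{1}{2(m+n-1)}(R^m_\phi+m\mu v^{-2})$. $J=\frac1n\mathbb{D}v$. The $W$-tractor-$D$ operator is defined in each scale by: $\mathbb{D}^Wu$ has top $w(m+n+2w-2)u$, middle $(m+n+2w-2)\nabla u$, bottom $-(\Delta_\phi u+w\mathrm{J}^Wu)$. *)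

(* Defs.v *)
(* Local-coordinate (chart) rendering of
   Riemannian/conformal geometry on an open set U of R^n. *)
From HB Require Import structures.
From mathcomp Require Import all_boot all_order all_algebra.
From mathcomp Require Import all_classical all_reals all_analysis.
Set Implicit Arguments. Unset Strict Implicit. Unset Printing Implicit Defensive.
Import Order.TTheory GRing.Theory Num.Theory.
Import numFieldNormedType.Exports.
Local Open Scope classical_set_scope.
Local Open Scope ring_scope.

Section Geometry.
Context {R : realType} {n : nat}.

Definition ecoord (i : 'I_n) : 'rV[R]_n := delta_mx 0 i.
Definition pd (i : 'I_n) (f : 'rV[R]_n -> R) : 'rV[R]_n -> R :=
  fun x => ('D_(ecoord i) f) x.
Definition iterpd (l : seq 'I_n) (f : 'rV[R]_n -> R) := foldr pd f l.
Definition smooth_on (U : set 'rV[R]_n) (f : 'rV[R]_n -> R) :=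
  forall (l : seq 'I_n) (x : 'rV[R]_n), U x -> differentiable (iterpd l f) x.

Definition is_metric_on (U : set 'rV[R]_n) (g : 'rV[R]_n -> 'M[R]_n) :=
  (forall i j, smooth_on U (fun x => g x i j)) /\
  (forall x, U x -> (g x)^T = g x /\
     forall y : 'rV[R]_n, y != 0 -> 0 < (y *m g x *m y^T) 0 0).

Definition ginv (g : 'rV[R]_n -> 'M[R]_n) x := invmx (g x).

Definition christoffel g (k i j : 'I_n) (x : 'rV[R]_n) : R :=
  2^-1 * \sum_(l < n) ginv g x k l *
    (pd i (fun y => g y j l) x + pd j (fun y => g y i l) x
     - pd l (fun y => g y i j) x).

Definition ricci g (i j : 'I_n) (x : 'rV[R]_n) : R :=
  \sum_(k < n) (pd k (christoffel g k i j) x - pd j (christoffel g k i k) x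
    + \sum_(l < n) (christoffel g k k l x * christoffel g l i j x
                    - christoffel g k j l x * christoffel g l i k x)).

Definition scal g x : R := \sum_(i < n) \sum_(j < n) ginv g x i j * ricci g i j x.

(* J = tr_g P with P = (Ric - J g)/(n-2); solving gives J = R/(2(n-1)) *)
Definition Jsc g x : R := scal g x / (2 * (n%:R - 1)).

Definition grad g (u : 'rV[R]_n -> R) x : 'rV[R]_n :=
  \row_i \sum_(j < n) ginv g x i j * pd j u x.
Definition gip (g : 'rV[R]_n -> 'M[R]_n) x (a b : 'rV[R]_n) : R :=
  (a *m g x *m b^T) 0 0.
Definition lap g (u : 'rV[R]_n -> R) x : R :=
  \sum_(i < n) \sum_(j < n) ginv g x i j *
    (pd i (pd j u) x - \sum_(k < n) christoffel g k i j x * pd k u x).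

(* standard tractors in a scale: top, middle (tangent vector), bottom *)
Record tractor := Tractor { ttop : R; tmid : 'rV[R]_n; tbot : R }.
Definition tadd (I J : tractor) :=
  Tractor (ttop I + ttop J) (tmid I + tmid J) (tbot I + tbot J).
Definition tscale (a : R) (I : tractor) :=
  Tractor (a * ttop I) (a *: tmid I) (a * tbot I).
Definition tsub (I J : tractor) := tadd I (tscale (-1) J).
Definition tmetric g x (I J : tractor) : R :=
  ttop I * tbot J + tbot I * ttop J + gip g x (tmid I) (tmid J).
Definition tX : tractor := Tractor 0 0 1.

Definition tD g (w : R) (u : 'rV[R]_n -> R) x : tractor :=
  Tractor (w * (n%:R + 2 * w - 2) * u x)
          ((n%:R + 2 * w - 2) *: grad g u x)
          (- (lap g u x + w * Jsc g x * u x)).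

Definition lapphi g (m : R) (v u : 'rV[R]_n -> R) x : R :=
  lap g u x + m / v x * gip g x (grad g v x) (grad g u x).
Definition Rphi g (m : R) (v : 'rV[R]_n -> R) x : R :=
  scal g x - 2 * m / v x * lap g v x
  - m * (m - 1) / (v x ^+ 2) * gip g x (grad g v x) (grad g v x).
Definition JW g (m mu : R) v x : R :=
  (Rphi g m v x + m * mu / (v x ^+ 2)) / (2 * (m + n%:R - 1)).

Definition tDW g (m mu : R) v (w : R) (u : 'rV[R]_n -> R) x : tractor :=
  Tractor (w * (m + n%:R + 2 * w - 2) * u x)
          ((m + n%:R + 2 * w - 2) *: grad g u x)
          (- (lapphi g m v u x + w * JW g m mu v x * u x)).

Definition Jtr g v x : tractor := tscale (n%:R)^-1 (tD g 1 v x).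

Definition conf_metric (g : 'rV[R]_n -> 'M[R]_n) (s : 'rV[R]_n -> R) x :=
  expR (2 * s x) *: g x.

(* components in the scale e^{2s} g of a weight-wt tractor with components I
   in the scale g *)
Definition tractor_rescale g (s : 'rV[R]_n -> R) (wt : R) (I : tractor) x :=
  tscale (expR (wt * s x))
    (Tractor (expR (s x) * ttop I)
             (expR (- s x) *: (tmid I + ttop I *: grad g s x))
             (expR (- s x) * (tbot I - gip g x (grad g s x) (tmid I)
                 - 2^-1 * gip g x (grad g s x) (grad g s x) * ttop I))).
End Geometry.

(* Main.v *)
Require Import Defs.
From HB Require Import structures.
From mathcomp Require Import all_boot all_order all_algebra.
From mathcomp Require Import all_classical all_reals all_analysis.
From mathcomp Require Import ring lra.
Import Order.TTheory GRing.Theory Num.Theory.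
Import numFieldNormedType.Exports.
Local Open Scope classical_set_scope.
Local Open Scope ring_scope.

Section Alg.
Variables (R : realFieldType) (n : nat).
Local Notation I := 'I_n.
Local Notation d i j := ((i == j)%:R : R).

Lemma sum_dl (a : I) (F : I -> R) : \sum_x d a x * F x = F a.
Proof.
rewrite (bigD1 a) //= eqxx mul1r big1 ?addr0 // => x xa.
by rewrite eq_sym (negbTE xa) mul0r.
Qed.
Lemma sum_dr (a : I) (F : I -> R) : \sum_x d x a * F x = F a.
Proof. by rewrite -[RHS](sum_dl a); apply: eq_bigr => x _; rewrite eq_sym. Qed.
Lemma sum_dl' (a : I) (F : I -> R) : \sum_x F x * d a x = F a.
Proof. by rewrite -[RHS](sum_dl a); apply: eq_bigr => x _; rewrite mulrC. Qed.
Lemma sum_dr' (a : I) (F : I -> R) : \sum_x F x * d x a = F a.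
Proof. by rewrite -[RHS](sum_dl a); apply: eq_bigr => x _; rewrite mulrC eq_sym. Qed.
Lemma sum_dd : \sum_(x : I) d x x = n%:R.
Proof. by under eq_bigr do rewrite eqxx; rewrite sumr_const card_ord. Qed.

Variables (G H : I -> I -> R) (dG : I -> I -> I -> R) (S : I -> R) (SS : I -> I -> R).
Hypothesis GS : forall i j, G i j = G j i.
Hypothesis HS : forall i j, H i j = H j i.
Hypothesis HG : forall a b, \sum_c H a c * G c b = d a b.
Hypothesis dGS : forall k i j, dG k i j = dG k j i.

Lemma GH a b : \sum_c G a c * H c b = d a b.
Proof.
rewrite (eq_sym a) -HG; apply: eq_bigr => c _; rewrite mulrC GS HS //.
Qed.

Definition Gam k i j := 2^-1 * \sum_l H k l * (dG i j l + dG j i l - dG l i j).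
Definition dH k a b := - \sum_c \sum_e H a c * dG k c e * H e b.
Definition T k := \sum_l H k l * S l.
Definition A k i j := d k i * S j + d k j * S i - G i j * T k.
Definition dT q k := \sum_l (dH q k l * S l + H k l * SS q l).
Definition dA q k i j := d k i * SS q j + d k j * SS q i - (dG q i j * T k + G i j * dT q k).
Definition cc l := \sum_i \sum_j H i j * dG l i j.
Definition gam l := \sum_i \sum_j H i j * Gam l i j.
Definition ss := \sum_k S k * T k.

Lemma GT l : \sum_k G l k * T k = S l.
Proof.
rewrite -[RHS](sum_dl l).
under [RHS]eq_bigr do rewrite -GH mulr_suml.
rewrite exchange_big /=; apply: eq_bigr => k _; rewrite /T mulr_sumr.
by apply: eq_bigr => m _; rewrite mulrA.
Qed.

Lemma GT' l : \sum_k G k l * T k = S l.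
Proof. by rewrite -GT; apply: eq_bigr => k _; rewrite GS. Qed.

Lemma trHG : \sum_i \sum_j H i j * G i j = n%:R.
Proof.
rewrite -sum_dd; apply: eq_bigr => i _; rewrite -HG.
by apply: eq_bigr => j _; rewrite (GS i j).
Qed.


Lemma sum2D (F1 F2 : I -> I -> R) :
  \sum_i \sum_j (F1 i j + F2 i j) = \sum_i \sum_j F1 i j + \sum_i \sum_j F2 i j.
Proof. by rewrite -big_split; apply: eq_bigr => i _; rewrite big_split. Qed.
Lemma sum2B (F1 F2 : I -> I -> R) :
  \sum_i \sum_j (F1 i j - F2 i j) = \sum_i \sum_j F1 i j - \sum_i \sum_j F2 i j.
Proof. by rewrite -sumrB; apply: eq_bigr => i _; rewrite sumrB. Qed.

Lemma sum2N (F : I -> I -> R) :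
  \sum_i \sum_j - F i j = - \sum_i \sum_j F i j.
Proof. by rewrite -sumrN; apply: eq_bigr => i _; rewrite sumrN. Qed.

Lemma c1 l : \sum_k A k k l = n%:R * S l.
Proof.
rewrite /A sumrB big_split /= -mulr_suml sum_dd sum_dr GT'; ring.
Qed.

Lemma c1' i : \sum_l A l i l = n%:R * S i.
Proof.
rewrite /A sumrB big_split /= -mulr_suml sum_dd sum_dr GT; ring.
Qed.

Lemma HT j : \sum_i H i j * S i = T j.
Proof. by apply: eq_bigr => i _; rewrite HS. Qed.

Lemma c2 l : \sum_i \sum_j H i j * A l i j = (2 - n%:R) * T l.
Proof.
transitivity (\sum_i \sum_j (d l i * (H i j * S j) + d l j * (H i j * S i)
   - H i j * G i j * T l)).
  by apply: eq_bigr => i _; apply: eq_bigr => j _; rewrite /A; ring.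
rewrite sum2B sum2D.
have p1 : \sum_i \sum_j d l i * (H i j * S j) = T l.
  by under eq_bigr do rewrite -mulr_sumr; rewrite sum_dl.
have p2 : \sum_i \sum_j d l j * (H i j * S i) = T l.
  by under eq_bigr do rewrite sum_dl; rewrite HT.
rewrite p1 p2 (_ : \sum_i \sum_j H i j * G i j * T l = n%:R * T l); first ring.
by rewrite -trHG mulr_suml; apply: eq_bigr => i _; rewrite mulr_suml.
Qed.

Lemma GamS k i j : Gam k i j = Gam k j i.
Proof. by rewrite /Gam; congr (_ * _); apply: eq_bigr => l _; rewrite (dGS l i j); ring. Qed.

Lemma c3 l : \sum_k Gam k k l = 2^-1 * cc l.
Proof.
rewrite /Gam -mulr_sumr; congr (_ * _).
transitivity (\sum_k \sum_m (H k m * dG l k m + H k m * dG k l m - H k m * dG m k l)).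
  by apply: eq_bigr => k _; apply: eq_bigr => m _; ring.
rewrite sum2B sum2D.
have -> : \sum_k \sum_m H k m * dG k l m = \sum_k \sum_m H k m * dG m k l.
  by rewrite exchange_big; apply: eq_bigr => m _; apply: eq_bigr => k _; rewrite HS dGS.
by rewrite addrK.
Qed.

Lemma c3' l : \sum_k Gam k l k = 2^-1 * cc l.
Proof. by rewrite -c3; apply: eq_bigr => k _; rewrite GamS. Qed.

Lemma sepL (X : I -> I -> R) (Y : I -> I -> I -> R) :
  \sum_i \sum_j H i j * \sum_k \sum_l X k l * Y l i j
  = \sum_l (\sum_k X k l) * (\sum_i \sum_j H i j * Y l i j).
Proof.
transitivity (\sum_i \sum_j \sum_l \sum_k H i j * X k l * Y l i j).
  apply: eq_bigr => i _; apply: eq_bigr => j _; rewrite exchange_big mulr_sumr.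
  by apply: eq_bigr => l _; rewrite mulr_sumr; apply: eq_bigr => k _; rewrite mulrA.
transitivity (\sum_l \sum_i \sum_j \sum_k H i j * X k l * Y l i j).
  by under eq_bigr => i _ do rewrite exchange_big; rewrite exchange_big.
apply: eq_bigr => l _; rewrite [RHS]mulr_suml.
under [RHS]eq_bigr do rewrite mulr_sumr; rewrite [RHS]exchange_big.
apply: eq_bigr => i _; under [RHS]eq_bigr do rewrite mulr_sumr.
rewrite [RHS]exchange_big; apply: eq_bigr => j _.
by apply: eq_bigr => k _; ring.
Qed.

Definition cT := \sum_l cc l * T l.
Definition gs := \sum_k gam k * S k.

Lemma T1 : \sum_i \sum_j H i j * \sum_k \sum_l Gam k k l * A l i j
  = (2 - n%:R) * 2^-1 * cT.
Proof.
rewrite sepL /cT mulr_sumr; apply: eq_bigr => l _; rewrite c3 c2; ring.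
Qed.

Lemma T2 : \sum_i \sum_j H i j * \sum_k \sum_l A k k l * Gam l i j
  = n%:R * gs.
Proof.
rewrite sepL /gs mulr_sumr; apply: eq_bigr => l _; rewrite c1 /gam; ring.
Qed.

Lemma T3 : \sum_i \sum_j H i j * \sum_k \sum_l A k k l * A l i j
  = n%:R * (2 - n%:R) * ss.
Proof.
rewrite sepL /ss mulr_sumr; apply: eq_bigr => l _; rewrite c1 c2; ring.
Qed.

Lemma contrHG (F : I -> R) j : \sum_i H i j * \sum_k G i k * F k = F j.
Proof.
rewrite -[RHS](sum_dl j).
under eq_bigr do rewrite mulr_sumr.
rewrite exchange_big; apply: eq_bigr => k _.
rewrite -HG mulr_suml; apply: eq_bigr => i _; by rewrite (HS i j) mulrA.
Qed.

Lemma contrHG' (F : I -> R) i : \sum_j H i j * \sum_l G j l * F l = F i.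
Proof.
rewrite -[RHS](contrHG F i); apply: eq_bigr => j _; by rewrite HS.
Qed.

Lemma gsE : \sum_i \sum_j H i j * \sum_k Gam k i j * S k = gs.
Proof.
rewrite /gs /gam; under [RHS]eq_bigr do rewrite mulr_suml.
rewrite [RHS]exchange_big; apply: eq_bigr => i _.
under [RHS]eq_bigr do rewrite mulr_suml.
rewrite [RHS]exchange_big; apply: eq_bigr => j _.
by rewrite mulr_sumr; apply: eq_bigr => k _; rewrite mulrA.
Qed.

Lemma ssE : \sum_i \sum_j H i j * (S i * S j) = ss.
Proof.
rewrite /ss /T; apply: eq_bigr => i _; rewrite mulr_sumr.
by apply: eq_bigr => j _; ring.
Qed.

Lemma T4 : \sum_i \sum_j H i j * \sum_k \sum_l Gam k j l * A l i k = gs.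
Proof.
have e : forall i j, \sum_k \sum_l Gam k j l * A l i k =
   \sum_k Gam k i j * S k + (\sum_k Gam k j k) * S i
   - \sum_k G i k * (\sum_l Gam k j l * T l).
  move=> i j.
  transitivity (\sum_k \sum_l (d l i * (Gam k j l * S k) + d l k * (Gam k j l * S i)
     - G i k * (Gam k j l * T l))).
    by apply: eq_bigr => k _; apply: eq_bigr => l _; rewrite /A; ring.
  rewrite sum2B sum2D.
  under eq_bigr do rewrite sum_dr.
  under [X in _ + X - _]eq_bigr do rewrite sum_dr.
  under [X in _ - X]eq_bigr do rewrite -mulr_sumr.
  rewrite -mulr_suml; congr (_ + _ - _); apply: eq_bigr => k _; by rewrite GamS.
under eq_bigr do under eq_bigr do rewrite e mulrBr mulrDr.
rewrite sum2B sum2D gsE [X in _ - X]exchange_big.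
under [X in _ - X]eq_bigr do rewrite contrHG.
have -> : \sum_i \sum_j H i j * ((\sum_k Gam k j k) * S i) = \sum_j 2^-1 * cc j * T j.
  rewrite exchange_big; apply: eq_bigr => j _; rewrite -HT mulr_sumr.
  by apply: eq_bigr => i _; rewrite c3'; ring.
have -> : \sum_j \sum_l Gam j j l * T l = \sum_j 2^-1 * cc j * T j.
  rewrite exchange_big; apply: eq_bigr => l _; rewrite -mulr_suml c3; ring.
ring.
Qed.

Lemma T5 : \sum_i \sum_j H i j * \sum_k \sum_l A k j l * Gam l i k = gs.
Proof.
have e : forall i j, \sum_k \sum_l A k j l * Gam l i k =
   \sum_l Gam l i j * S l + S j * (\sum_k Gam k i k)
   - \sum_l G j l * (\sum_k T k * Gam l i k).
  move=> i j.
  transitivity (\sum_l \sum_k (d k j * (S l * Gam l i k) + d k l * (S j * Gam l i k)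
     - G j l * (T k * Gam l i k))).
    rewrite exchange_big.
    by apply: eq_bigr => l _; apply: eq_bigr => k _; rewrite /A; ring.
  rewrite sum2B sum2D.
  under eq_bigr do rewrite sum_dr.
  under [X in _ + X - _]eq_bigr do rewrite sum_dr.
  under [X in _ - X]eq_bigr do rewrite -mulr_sumr.
  rewrite -mulr_sumr; congr (_ + _ - _); apply: eq_bigr => k _; by rewrite mulrC.
under eq_bigr do under eq_bigr do rewrite e mulrBr mulrDr.
rewrite sum2B sum2D gsE.
under [X in _ - X]eq_bigr do rewrite contrHG'.
have -> : \sum_i \sum_j H i j * (S j * \sum_k Gam k i k) = \sum_i 2^-1 * cc i * T i.
  apply: eq_bigr => i _; rewrite c3' /T [RHS]mulr_sumr.
  by apply: eq_bigr => j _; ring.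
have -> : \sum_i \sum_k T k * Gam i i k = \sum_k 2^-1 * cc k * T k.
  rewrite exchange_big; apply: eq_bigr => k _; rewrite -mulr_sumr c3; ring.
ring.
Qed.

Lemma sA i j : \sum_l S l * A l i j = 2 * (S i * S j) - G i j * ss.
Proof.
transitivity (\sum_l (d l i * (S l * S j) + d l j * (S l * S i) - G i j * (S l * T l))).
  by apply: eq_bigr => l _; rewrite /A; ring.
rewrite sumrB big_split /= !sum_dr -mulr_sumr /ss; ring.
Qed.

Lemma TA l i : \sum_k T k * A l i k = d l i * ss.
Proof.
transitivity (\sum_k (d l i * (S k * T k) + d l k * (T k * S i) - (G i k * T k) * T l)).
  by apply: eq_bigr => k _; rewrite /A; ring.
rewrite sumrB big_split /= sum_dl -mulr_sumr -mulr_suml GT /ss; ring.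
Qed.

Lemma T6 : \sum_i \sum_j H i j * \sum_k \sum_l A k j l * A l i k
  = (2 - n%:R) * ss.
Proof.
have e : forall i j, \sum_k \sum_l A k j l * A l i k =
    (n%:R + 2) * (S i * S j) - 2 * G i j * ss.
  move=> i j; rewrite exchange_big /=.
  transitivity (\sum_l (S l * A l i j + S j * A l i l - G j l * (d l i * ss))).
    apply: eq_bigr => l _; rewrite -TA mulr_sumr.
    transitivity (\sum_k (d k j * (S l * A l i k) + d k l * (S j * A l i k)
       - G j l * (T k * A l i k))).
      by apply: eq_bigr => k _; rewrite /A; ring.
    by rewrite sumrB big_split /= !sum_dr.
  rewrite sumrB big_split /= sA -mulr_sumr c1'.
  under eq_bigr do rewrite mulrA.
  rewrite -mulr_suml sum_dr' (GS j i); ring.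
under eq_bigr do under eq_bigr do rewrite e.
transitivity (\sum_i \sum_j ((n%:R + 2) * (H i j * (S i * S j)) - 2 * ss * (H i j * G i j))).
  by apply: eq_bigr => i _; apply: eq_bigr => j _; ring.
rewrite sum2B.
under eq_bigr do rewrite -mulr_sumr.
under [X in _ - X]eq_bigr do rewrite -mulr_sumr.
rewrite -!mulr_sumr ssE trHG; ring.
Qed.

Definition hss := \sum_i \sum_j H i j * SS i j.
Definition Dt := \sum_k dT k k.
Definition W := \sum_i \sum_j \sum_l H i j * dG i j l * T l.

Lemma cTE : \sum_i \sum_j H i j * \sum_k dG k i j * T k = cT.
Proof.
rewrite /cT /cc; under [RHS]eq_bigr do rewrite mulr_suml.
rewrite [RHS]exchange_big; apply: eq_bigr => i _.
under [RHS]eq_bigr do rewrite mulr_suml.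
rewrite [RHS]exchange_big; apply: eq_bigr => j _.
by rewrite mulr_sumr; apply: eq_bigr => k _; rewrite mulrA.
Qed.

Lemma hssT : \sum_i \sum_j H i j * SS j i = hss.
Proof.
rewrite /hss exchange_big; apply: eq_bigr => j _; apply: eq_bigr => i _.
by rewrite HS.
Qed.

Lemma Lin1 : \sum_i \sum_j H i j * \sum_k dA k k i j
  = 2 * hss - cT - n%:R * Dt.
Proof.
have e : forall i j, \sum_k dA k k i j =
    SS i j + SS j i - \sum_k dG k i j * T k - G i j * Dt.
  move=> i j; rewrite /dA /Dt sumrB !big_split /= !sum_dr -mulr_sumr; ring.
under eq_bigr do under eq_bigr do rewrite e.
transitivity (\sum_i \sum_j (H i j * SS i j + H i j * SS j i
   - H i j * \sum_k dG k i j * T k - Dt * (H i j * G i j))).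
  by apply: eq_bigr => i _; apply: eq_bigr => j _; ring.
rewrite !sum2B sum2D hssT cTE.
under [X in _ - X]eq_bigr do rewrite -mulr_sumr.
rewrite -mulr_sumr trHG -/hss; ring.
Qed.

Lemma GdH i j l : \sum_k G i k * dH j k l = - \sum_e dG j i e * H e l.
Proof.
rewrite /dH; under eq_bigr do rewrite mulrN.
rewrite sumrN; congr (- _).
transitivity (\sum_c \sum_e (\sum_k G i k * H k c) * dG j c e * H e l).
  under eq_bigr do rewrite mulr_sumr.
  rewrite exchange_big; apply: eq_bigr => c _.
  under eq_bigr do rewrite mulr_sumr.
  rewrite exchange_big; apply: eq_bigr => e _.
  by rewrite !mulr_suml; apply: eq_bigr => k _; ring.
under eq_bigr do under eq_bigr do rewrite GH.
rewrite exchange_big; apply: eq_bigr => e _.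
by rewrite -mulr_suml sum_dl.
Qed.

Lemma GdT i j : \sum_k G i k * dT j k = SS j i - \sum_e dG j i e * T e.
Proof.
transitivity (\sum_l ((\sum_k G i k * dH j k l) * S l + (\sum_k G i k * H k l) * SS j l)).
  rewrite /dT; under eq_bigr do rewrite mulr_sumr.
  rewrite exchange_big; apply: eq_bigr => l _.
  by rewrite !mulr_suml -big_split; apply: eq_bigr => k _; rewrite /= mulrDr !mulrA.
rewrite big_split /=; under [X in _ + X]eq_bigr do rewrite GH.
rewrite sum_dl addrC; congr (_ + _).
under eq_bigr do rewrite GdH mulNr mulr_suml.
rewrite sumrN; congr (- _).
rewrite exchange_big; apply: eq_bigr => e _; rewrite /T mulr_sumr.
by apply: eq_bigr => l _; ring.
Qed.

Lemma Lin2 : \sum_i \sum_j H i j * \sum_k dA j k i k = n%:R * hss.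
Proof.
have e : forall i j, \sum_k dA j k i k = n%:R * SS j i.
  move=> i j; rewrite /dA sumrB !big_split /= GdT sum_dr -mulr_suml sum_dd; ring.
under eq_bigr do under eq_bigr do rewrite e.
rewrite -hssT mulr_sumr; apply: eq_bigr => i _; rewrite mulr_sumr.
by apply: eq_bigr => j _; ring.
Qed.

Lemma DtE : Dt = hss - W.
Proof.
rewrite /Dt /dT.
under eq_bigr do rewrite big_split /=.
rewrite big_split /= addrC; congr (_ + _).
rewrite /W -sumrN; apply: eq_bigr => k _.
under eq_bigr do rewrite /dH mulNr mulr_suml.
rewrite sumrN; congr (- _).
rewrite exchange_big; apply: eq_bigr => c _.
under eq_bigr do rewrite mulr_suml.
rewrite exchange_big; apply: eq_bigr => e _.
by rewrite /T mulr_sumr; apply: eq_bigr => l _; ring.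
Qed.

Lemma GamS_T i j : \sum_k Gam k i j * S k
  = 2^-1 * \sum_l (dG i j l + dG j i l - dG l i j) * T l.
Proof.
rewrite /Gam; under eq_bigr do rewrite -mulrA.
rewrite -mulr_sumr; congr (_ * _).
under eq_bigr do rewrite mulr_suml.
rewrite exchange_big; apply: eq_bigr => l _.
rewrite -HT mulr_sumr; apply: eq_bigr => k _; ring.
Qed.

Lemma gsW : gs = W - 2^-1 * cT.
Proof.
rewrite -gsE.
have e : forall i j, H i j * \sum_k Gam k i j * S k = 2^-1 * (
   \sum_l H i j * dG i j l * T l + \sum_l H i j * dG j i l * T l
   - H i j * \sum_l dG l i j * T l).
  move=> i j; rewrite GamS_T.
  rewrite (_ : \sum_l (dG i j l + dG j i l - dG l i j) * T l =
     \sum_l dG i j l * T l + \sum_l dG j i l * T l - \sum_l dG l i j * T l).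
    have h1 : forall a b, \sum_l H i j * dG a b l * T l = H i j * \sum_l dG a b l * T l.
      by move=> a b; rewrite mulr_sumr; apply: eq_bigr => l _; ring.
    rewrite !h1; ring.
  by rewrite -big_split -sumrB; apply: eq_bigr => l _; rewrite /=; ring.
under eq_bigr do under eq_bigr do rewrite e.
under eq_bigr do rewrite -mulr_sumr.
rewrite -mulr_sumr sum2B sum2D cTE.
have -> : \sum_i \sum_j \sum_l H i j * dG j i l * T l = W.
  rewrite /W exchange_big; apply: eq_bigr => j _; apply: eq_bigr => i _.
  by apply: eq_bigr => l _; rewrite HS.
by rewrite -/W; field.
Qed.

Lemma scal_alg :
  \sum_i \sum_j H i j * \sum_k (dA k k i j - dA j k i k +
     \sum_l ((Gam k k l + A k k l) * (Gam l i j + A l i j)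
            - (Gam k j l + A k j l) * (Gam l i k + A l i k)
            - (Gam k k l * Gam l i j - Gam k j l * Gam l i k)))
  = - (2 * (n%:R - 1)) * (\sum_i \sum_j H i j * (SS i j - \sum_k Gam k i j * S k))
    - (n%:R - 1) * (n%:R - 2) * ss.
Proof.
transitivity (\sum_i \sum_j (H i j * \sum_k dA k k i j - H i j * \sum_k dA j k i k
   + H i j * \sum_k \sum_l (Gam k k l * A l i j)
   + H i j * \sum_k \sum_l (A k k l * Gam l i j)
   + H i j * \sum_k \sum_l (A k k l * A l i j)
   - H i j * \sum_k \sum_l (Gam k j l * A l i k)
   - H i j * \sum_k \sum_l (A k j l * Gam l i k)
   - H i j * \sum_k \sum_l (A k j l * A l i k))).
  apply: eq_bigr => i _; apply: eq_bigr => j _.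
  rewrite big_split sumrB /=.
  rewrite (_ : \sum_k \sum_l ((Gam k k l + A k k l) * (Gam l i j + A l i j)
            - (Gam k j l + A k j l) * (Gam l i k + A l i k)
            - (Gam k k l * Gam l i j - Gam k j l * Gam l i k)) =
    \sum_k \sum_l (Gam k k l * A l i j) + \sum_k \sum_l (A k k l * Gam l i j)
   + \sum_k \sum_l (A k k l * A l i j) - \sum_k \sum_l (Gam k j l * A l i k)
   - \sum_k \sum_l (A k j l * Gam l i k) - \sum_k \sum_l (A k j l * A l i k)).
    ring.
  rewrite -!sum2D -!sum2B; apply: eq_bigr => k _; apply: eq_bigr => l _; ring.
rewrite !sum2B !sum2D ?sum2B sum2N Lin1 Lin2 T1 T2 T3 T4 T5 T6.
have -> : \sum_i \sum_j H i j * (SS i j - \sum_k Gam k i j * S k) = hss - gs.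
  rewrite /hss -gsE -sum2B; apply: eq_bigr => i _; apply: eq_bigr => j _; ring.
by rewrite DtE gsW; field.
Qed.

Lemma christ_alg (E : R) k i j : E != 0 ->
  2^-1 * \sum_l (E^-1 * H k l) *
    ((E * (2 * S i)) * G j l + E * dG i j l
     + ((E * (2 * S j)) * G i l + E * dG j i l)
     - ((E * (2 * S l)) * G i j + E * dG l i j))
  = Gam k i j + A k i j.
Proof.
move=> E0.
have HG' : forall a b, \sum_l H a l * G b l = d a b.
  by move=> a b; rewrite -HG; apply: eq_bigr => l _; rewrite GS.
transitivity (2^-1 * \sum_l H k l * (dG i j l + dG j i l - dG l i j)
   + ((\sum_l H k l * G j l) * S i + (\sum_l H k l * G i l) * S j
      - G i j * \sum_l H k l * S l)).
  rewrite (eq_bigr (fun l => H k l * (dG i j l + dG j i l - dG l i j)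
     + 2 * ((H k l * G j l) * S i + (H k l * G i l) * S j - G i j * (H k l * S l)))); last first.
    by move=> l _; field.
  rewrite big_split /= -mulr_sumr sumrB big_split /= -!mulr_suml -mulr_sumr.
  by field.
by rewrite !HG' /Gam /A /T; congr (_ + _); ring.
Qed.

Lemma dH_solve (P dGk : I -> I -> R) :
  (forall a b, \sum_c P a c * G c b + \sum_c H a c * dGk c b = 0) ->
  forall a b, P a b = - \sum_c \sum_e H a c * dGk c e * H e b.
Proof.
move=> h a b.
have h' : forall c, \sum_x P a x * G x c = - \sum_e H a e * dGk e c.
  by move=> c; apply/eqP; rewrite -addr_eq0; apply/eqP; apply: h.
transitivity (\sum_c (\sum_x P a x * G x c) * H c b).
  rewrite -{1}(sum_dr' b (P a)).
  under eq_bigr do rewrite -GH mulr_sumr.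
  rewrite exchange_big /=.
  by apply: eq_bigr => c _; rewrite mulr_suml; apply: eq_bigr => x _; ring.
under eq_bigr do rewrite h' mulNr mulr_suml.
rewrite sumrN exchange_big; congr (- _).
Qed.

Lemma lapA (Uk : I -> R) :
  \sum_i \sum_j H i j * \sum_k A k i j * Uk k = (2 - n%:R) * \sum_k T k * Uk k.
Proof.
transitivity (\sum_k Uk k * \sum_i \sum_j H i j * A k i j).
  under [RHS]eq_bigr do rewrite mulr_sumr.
  rewrite [RHS]exchange_big; apply: eq_bigr => i _.
  under [RHS]eq_bigr do rewrite mulr_sumr.
  rewrite [RHS]exchange_big; apply: eq_bigr => j _.
  by rewrite mulr_sumr; apply: eq_bigr => k _; ring.
rewrite mulr_sumr; apply: eq_bigr => k _; rewrite c2; ring.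
Qed.

Lemma lap_prod (E c F : R) (f : I -> R) (ff : I -> I -> R) :
  \sum_i \sum_j H i j * (E * (c ^+ 2 * S i * S j * F + c * S i * f j + c * S j * f i
        + c * F * SS i j + ff i j) - \sum_k Gam k i j * (E * (c * S k * F + f k)))
  = E * (c ^+ 2 * ss * F + 2 * c * \sum_k T k * f k
      + c * F * \sum_i \sum_j H i j * (SS i j - \sum_k Gam k i j * S k)
      + \sum_i \sum_j H i j * (ff i j - \sum_k Gam k i j * f k)).
Proof.
transitivity (\sum_i \sum_j (E * (c ^+ 2 * F) * (H i j * (S i * S j))
   + E * c * (H i j * (S i * f j)) + E * c * (H i j * (S j * f i))
   + E * c * F * (H i j * (SS i j - \sum_k Gam k i j * S k))
   + E * (H i j * (ff i j - \sum_k Gam k i j * f k)))).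
  apply: eq_bigr => i _; apply: eq_bigr => j _.
  rewrite (_ : \sum_k Gam k i j * (E * (c * S k * F + f k)) =
     E * c * F * \sum_k Gam k i j * S k + E * \sum_k Gam k i j * f k); first ring.
  by rewrite !mulr_sumr -big_split; apply: eq_bigr => k _; rewrite /=; ring.
rewrite !sum2D.
under eq_bigr do rewrite -mulr_sumr.
under [X in _ + X + _ + _ + _]eq_bigr do rewrite -mulr_sumr.
under [X in _ + X + _ + _]eq_bigr do rewrite -mulr_sumr.
under [X in _ + X + _]eq_bigr do rewrite -mulr_sumr.
under [X in _ + X]eq_bigr do rewrite -mulr_sumr.
rewrite -!mulr_sumr ssE.
have e1 : \sum_i \sum_j H i j * (S i * f j) = \sum_k T k * f k.
  rewrite exchange_big; apply: eq_bigr => j _; rewrite -HT mulr_suml.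
  by apply: eq_bigr => i _; ring.
have e2 : \sum_i \sum_j H i j * (S j * f i) = \sum_k T k * f k.
  apply: eq_bigr => i _; rewrite /T mulr_suml.
  by apply: eq_bigr => j _; ring.
rewrite e1 e2; ring.
Qed.
End Alg.


Section Lib.
Context {R : realType} {n : nat}.
Local Notation V := 'rV[R]_n.
Implicit Types (f h : V -> R) (x : V).

Definition Dbl f x := forall v : V, derivable f x v.

Lemma Dbl_diff f x : differentiable f x -> Dbl f x.
Proof. by move=> d v; apply: diff_derivable. Qed.

Lemma Dbl_cst (c : R) x : Dbl (fun _ => c) x.
Proof. by move=> v; apply: derivable_cst. Qed.

Lemma DblD f h x : Dbl f x -> Dbl h x -> Dbl (fun y => f y + h y) x.
Proof. by move=> df dh v; apply: derivableD. Qed.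

Lemma DblN f x : Dbl f x -> Dbl (fun y => - f y) x.
Proof. by move=> df v; apply: derivableN. Qed.

Lemma DblB f h x : Dbl f x -> Dbl h x -> Dbl (fun y => f y - h y) x.
Proof. by move=> df dh; apply: DblD => //; apply: DblN. Qed.

Lemma DblM f h x : Dbl f x -> Dbl h x -> Dbl (fun y => f y * h y) x.
Proof. by move=> df dh v; apply: derivableM. Qed.

Lemma DblV f x : f x != 0 -> Dbl f x -> Dbl (fun y => (f y)^-1) x.
Proof. by move=> f0 df v; apply: derivableV. Qed.

Lemma Dbl_near f h x : (\forall y \near x, f y = h y) -> Dbl f x -> Dbl h x.
Proof. by move=> e df v; apply: near_eq_derivable (df v). Qed.

Lemma Dbl_sum (I : Type) (r : seq I) (P : pred I) (F : I -> V -> R) x :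
  (forall i, P i -> Dbl (F i) x) -> Dbl (fun y => \sum_(i <- r | P i) F i y) x.
Proof.
move=> dF; rewrite -fct_sumE; elim/big_ind: _ => //.
by move=> a b da db v; apply: derivableD.
Qed.

Lemma Dbl_prod (I : Type) (r : seq I) (P : pred I) (F : I -> V -> R) x :
  (forall i, P i -> Dbl (F i) x) -> Dbl (fun y => \prod_(i <- r | P i) F i y) x.
Proof.
move=> dF; rewrite -fct_prodE; elim/big_ind: _ => //.
by move=> a b da db v; apply: derivableM.
Qed.

Lemma pdD i f h x : Dbl f x -> Dbl h x ->
  pd i (fun y => f y + h y) x = pd i f x + pd i h x.
Proof. by move=> df dh; rewrite /pd; apply: deriveD. Qed.

Lemma pdN i f x : Dbl f x -> pd i (fun y => - f y) x = - pd i f x.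
Proof. by move=> df; rewrite /pd; apply: deriveN. Qed.

Lemma pdB i f h x : Dbl f x -> Dbl h x ->
  pd i (fun y => f y - h y) x = pd i f x - pd i h x.
Proof. by move=> df dh; rewrite pdD ?pdN //; apply: DblN. Qed.

Lemma pdM i f h x : Dbl f x -> Dbl h x ->
  pd i (fun y => f y * h y) x = pd i f x * h x + f x * pd i h x.
Proof.
move=> df dh; rewrite /pd.
have -> := (@deriveM R V f h x (ecoord i) (df _) (dh _)).
by rewrite /GRing.scale /= addrC mulrC.
Qed.

Lemma pd_cst i (c : R) x : pd i (fun _ => c) x = 0.
Proof. exact: derive_cst. Qed.

Lemma pdMl i (c : R) f x : Dbl f x -> pd i (fun y => c * f y) x = c * pd i f x.
Proof. by move=> df; rewrite pdM ?pd_cst ?mul0r ?add0r //; apply: Dbl_cst. Qed.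

Lemma pd_near i f h x : (\forall y \near x, f y = h y) -> pd i f x = pd i h x.
Proof. by move=> e; rewrite /pd; apply: near_eq_derive. Qed.

Lemma pd_sum i (I : Type) (r : seq I) (P : pred I) (F : I -> V -> R) x :
  (forall j, P j -> Dbl (F j) x) ->
  pd i (fun y => \sum_(j <- r | P j) F j y) x = \sum_(j <- r | P j) pd i (F j) x.
Proof.
move=> dF; elim: r => [|a r IH].
  by rewrite big_nil; under eq_fun do rewrite big_nil; apply: pd_cst.
rewrite big_cons; under eq_fun do rewrite big_cons.
case: (boolP (P a)) => Pa.
  rewrite pdD ?IH //; first exact: dF.
  by apply: Dbl_sum.
exact: IH.
Qed.

Lemma diff_expRM (c : R) (s : V -> R) x : differentiable s x ->
  differentiable (fun y => expR (c * s y)) x.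
Proof.
move=> ds.
have dcs : differentiable (fun y => c * s y) x.
  by apply: differentiableM => //; apply: differentiable_cst.
apply: (@differentiable_comp _ _ _ _ (fun y => c * s y) expR) => //.
by apply/derivable1_diffP; apply: derivable_expR.
Qed.

Lemma pd_expRM i (c : R) (s : V -> R) x : differentiable s x ->
  pd i (fun y => expR (c * s y)) x = expR (c * s x) * (c * pd i s x).
Proof.
move=> ds.
have dcs : differentiable (fun y => c * s y) x.
  by apply: differentiableM => //; apply: differentiable_cst.
rewrite /pd deriveE; last exact: diff_expRM.
rewrite (@diff_comp _ _ _ _ (fun y => c * s y) expR) //; last first.
  by apply/derivable1_diffP; apply: derivable_expR.
rewrite /= deriv1E; last exact: derivable_expR.
rewrite /= derive1E.
have -> : 'D_1 expR (c * s x) = expR (c * s x) by rewrite derive_val.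
rewrite -deriveE // -/(pd i _ x) pdMl; last exact: Dbl_diff.
by rewrite /GRing.scale /= mulrC.
Qed.

End Lib.


Section P1.
Context {R : realType} {n : nat}.
Implicit Types (g : 'rV[R]_n -> 'M[R]_n).

Lemma gipZl g x k (a b : 'rV[R]_n) : gip g x (k *: a) b = k * gip g x a b.
Proof. by rewrite /gip -!scalemxAl mxE. Qed.
Lemma gipZr g x k (a b : 'rV[R]_n) : gip g x a (k *: b) = k * gip g x a b.
Proof. by rewrite /gip linearZ /= -scalemxAr mxE. Qed.
Lemma gip_sym g x (a b : 'rV[R]_n) : (g x)^T = g x -> gip g x a b = gip g x b a.
Proof.
move=> gs; rewrite /gip.
have -> : (a *m g x *m b^T) 0 0 = ((a *m g x *m b^T)^T) 0 0.
  by rewrite [RHS]mxE.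
by rewrite !trmx_mul trmxK gs mulmxA.
Qed.

Lemma part1 g (v sigma : 'rV[R]_n -> R) (m mu w : R) x :
  (3 <= n)%N -> (g x)^T = g x -> 0 < v x -> m != 1 - n%:R ->
     tsub (tscale (n%:R + 2 * w - 2) (tDW g m mu v w sigma x))
          (tscale (m + n%:R + 2 * w - 2) (tD g w sigma x))
     = tscale (- m / v x *
          tmetric g x (tD g w sigma x)
            (tadd (Jtr g v x)
               (tscale ((mu - (m - 1) * tmetric g x (Jtr g v x) (Jtr g v x))
                        / (2 * (m + n%:R - 1) * v x)) tX))) tX.
Proof.
move=> n3 gs vx0 m1.
have n0 : n%:R != 0 :> R by rewrite pnatr_eq0 -lt0n; apply: leq_trans n3.
have n1 : n%:R - 1 != 0 :> R.
  by rewrite subr_eq0 (eqr_nat R n 1); case: n n3 {n0} => [|[|]].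
have mn : m + n%:R - 1 != 0.
  by apply: contra m1 => /eqP h; apply/eqP; lra.
have v0 : v x != 0 by rewrite gt_eqF.
rewrite /tsub /tadd /tscale /tDW /tD /tX /Jtr /tmetric /=.
congr Tractor.
- by rewrite !mulr0; ring.
- rewrite !scalerA -scalerDl scaler0.
  by rewrite [X in X *: _ = _](_ : _ = 0) ?scale0r //; ring.
rewrite !scaler0 !addr0 !gipZl !gipZr.
rewrite /lapphi /JW /Rphi /Jsc.
rewrite (@gip_sym g x (grad g sigma x) (grad g v x) gs).
field.
by rewrite n0 v0 mn n1.
Qed.
End P1.


Section M1.
Context {R : realType} {n : nat} (U : set 'rV[R]_n) (g : 'rV[R]_n -> 'M[R]_n).
Hypothesis oU : open U.
Hypothesis gm : is_metric_on U g.
Local Notation V := 'rV[R]_n.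

Lemma nearU x : U x -> \forall y \near x, U y.
Proof. by move=> Ux; apply: open_nbhs_nbhs; split. Qed.

Lemma gS y i j : U y -> g y i j = g y j i.
Proof.
move=> Uy; have [_ h] := gm; have [e _] := h y Uy.
by rewrite -{1}e mxE.
Qed.

Lemma gunit y : U y -> g y \in unitmx.
Proof.
move=> Uy; have [_ h] := gm; have [_ pos] := h y Uy.
rewrite -row_free_unit -kermx_eq0.
apply/eqP/row_matrixP => i; rewrite row0; apply/eqP/negPn/negP => hz.
have := pos _ hz; rewrite -row_mul mulmx_ker row0 mul0mx mxE.
by rewrite ltxx.
Qed.

Lemma HS_ y i j : U y -> ginv g y i j = ginv g y j i.
Proof.
move=> Uy; have [_ h] := gm; have [e _] := h y Uy.
have e' : (invmx (g y))^T = invmx (g y) by rewrite trmx_inv e.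
by rewrite /ginv -{1}e' mxE.
Qed.

Lemma HG_ y a b : U y -> \sum_c ginv g y a c * g y c b = (a == b)%:R.
Proof.
move=> Uy; have := mulVmx (gunit _ Uy).
by move/(congr1 (fun M : 'M[R]_n => M a b)); rewrite !mxE.
Qed.

Lemma Dg y i j : U y -> Dbl (fun z => g z i j) y.
Proof. by move=> Uy; have [sm _] := gm; apply: Dbl_diff; apply: (sm i j [::] y Uy). Qed.

Lemma Dpg y k i j : U y -> Dbl (pd k (fun z => g z i j)) y.
Proof. by move=> Uy; have [sm _] := gm; apply: Dbl_diff; apply: (sm i j [:: k] y Uy). Qed.

Lemma Dsm (f : V -> R) y : smooth_on U f -> U y -> Dbl f y.
Proof. by move=> sm Uy; apply: Dbl_diff; apply: (sm [::] y Uy). Qed.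

Lemma Dsm1 (f : V -> R) k y : smooth_on U f -> U y -> Dbl (pd k f) y.
Proof. by move=> sm Uy; apply: Dbl_diff; apply: (sm [:: k] y Uy). Qed.

Lemma Dsm2 (f : V -> R) k l y : smooth_on U f -> U y -> Dbl (pd k (pd l f)) y.
Proof. by move=> sm Uy; apply: Dbl_diff; apply: (sm [:: k; l] y Uy). Qed.

Lemma Dbl_det k (M : V -> 'M[R]_k) y :
  (forall a b, Dbl (fun z => M z a b) y) -> Dbl (fun z => \det (M z)) y.
Proof.
move=> hM; rewrite /determinant.
apply: Dbl_sum => s _; apply: DblM; first exact: Dbl_cst.
by apply: Dbl_prod => i _; apply: hM.
Qed.

Lemma DH y i j : U y -> Dbl (fun z => ginv g z i j) y.
Proof.
move=> Uy.
apply: (@Dbl_near _ _ (fun z => (\det (g z))^-1 * cofactor (g z) j i)).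
  apply: filterS (nearU _ Uy) => z Uz.
  by rewrite /ginv /invmx (gunit _ Uz) !mxE.
have dd : Dbl (fun z => \det (g z)) y by apply: Dbl_det => a b; apply: Dg.
apply: DblM; first by apply: DblV => //; rewrite -unitfE -unitmxE; apply: gunit.
rewrite /cofactor; apply: DblM; first exact: Dbl_cst.
apply: Dbl_det => a b.
have -> : (fun z => (row' j (col' i (g z))) a b) = (fun z => g z (lift j a) (lift i b)).
  by apply: funext => z; rewrite !mxE.
exact: Dg.
Qed.


Lemma pdH y k a b : U y -> pd k (fun z => ginv g z a b) y =
  - \sum_c \sum_e ginv g y a c * pd k (fun z => g z c e) y * ginv g y e b.
Proof.
move=> Uy.
apply: (@dH_solve R n (fun i j => g y i j) (fun i j => ginv g y i j)
   (fun i j => gS y i j Uy) (fun i j => HS_ y i j Uy) (fun i j => HG_ y i j Uy)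
   (fun i j => pd k (fun z => ginv g z i j) y) (fun i j => pd k (fun z => g z i j) y)).
move=> c d.
transitivity (pd k (fun z => \sum_e ginv g z c e * g z e d) y).
  rewrite pd_sum; last by move=> e _; apply: DblM; [apply: DH | apply: Dg].
  rewrite -big_split; apply: eq_bigr => e _ /=; rewrite pdM //; [apply: DH | apply: Dg] => //.
rewrite (@pd_near _ _ _ _ (fun _ => (c == d)%:R)) ?pd_cst //.
by apply: filterS (nearU _ Uy) => z Uz; apply: HG_.
Qed.

Definition Tf (s : V -> R) k y := \sum_l ginv g y k l * pd l s y.
Definition Af (s : V -> R) k i j y :=
  (k == i)%:R * pd j s y + (k == j)%:R * pd i s y - g y i j * Tf s k y.

Lemma conf_entry (s : V -> R) j l :
  (fun z => conf_metric g s z j l) = (fun z => expR (2 * s z) * g z j l).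
Proof. by apply: funext => z; rewrite /conf_metric mxE. Qed.

Lemma christ_conf s y k i j : smooth_on U s -> U y ->
  christoffel (conf_metric g s) k i j y = christoffel g k i j y + Af s k i j y.
Proof.
move=> sms Uy.
have E0 : expR (2 * s y) != 0 by rewrite gt_eqF // expR_gt0.
have ginvc : forall a b, ginv (conf_metric g s) y a b = (expR (2 * s y))^-1 * ginv g y a b.
  move=> a b; rewrite /ginv /conf_metric invmxZ ?mxE //.
  by rewrite unitmxZ ?gunit // unitfE.
have pdc : forall a b c, pd a (fun z => conf_metric g s z b c) y =
   (expR (2 * s y) * (2 * pd a s y)) * g y b c + expR (2 * s y) * pd a (fun z => g z b c) y.
  move=> a b c; rewrite conf_entry pdM ?pd_expRM //; last exact: Dg.
    by apply: (sms [::] y Uy).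
  by apply: Dbl_diff; apply: diff_expRM; apply: (sms [::] y Uy).
rewrite /christoffel; under eq_bigr do rewrite ginvc !pdc.
exact: (@christ_alg R n (fun i j => g y i j) (fun i j => ginv g y i j)
   (fun q i j => pd q (fun z => g z i j) y) (fun i => pd i s y)
   (fun i j => gS y i j Uy) (fun i j => HG_ y i j Uy) _ k i j E0).
Qed.

Lemma Dchrist y k i j : U y -> Dbl (christoffel g k i j) y.
Proof.
move=> Uy; rewrite /christoffel; apply: DblM; first exact: Dbl_cst.
apply: Dbl_sum => l _; apply: DblM; first exact: DH.
by apply: DblB; [apply: DblD|]; apply: Dpg.
Qed.

Lemma DTf s y k : smooth_on U s -> U y -> Dbl (Tf s k) y.
Proof.
move=> sms Uy; rewrite /Tf; apply: Dbl_sum => l _; apply: DblM; first exact: DH.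
exact: Dsm1.
Qed.

Lemma DAf s y k i j : smooth_on U s -> U y -> Dbl (Af s k i j) y.
Proof.
move=> sms Uy; rewrite /Af; apply: DblB; first by apply: DblD; apply: DblM;
  [exact: Dbl_cst| exact: Dsm1 | exact: Dbl_cst | exact: Dsm1].
by apply: DblM; [exact: Dg | exact: DTf].
Qed.

Definition Gx x := fun i j => g x i j.
Definition Hx x := fun i j => ginv g x i j.
Definition dGx x := fun q i j => pd q (fun z => g z i j) x.
Definition Sx (s : V -> R) x := fun i => pd i s x.
Definition SSx (s : V -> R) x := fun q l => pd q (pd l s) x.

Lemma pdAf s x q k i j : smooth_on U s -> U x ->
  pd q (Af s k i j) x = dA R n (Gx x) (Hx x) (dGx x) (Sx s x) (SSx s x) q k i j.
Proof.
move=> sms Ux; rewrite /Af /dA /dT /dH.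
rewrite pdB; first last.
- by apply: DblM; [exact: Dg | exact: DTf].
- by apply: DblD; apply: DblM; [exact: Dbl_cst| exact: Dsm1 | exact: Dbl_cst | exact: Dsm1].
rewrite pdD; first last.
- by apply: DblM; [exact: Dbl_cst| exact: Dsm1].
- by apply: DblM; [exact: Dbl_cst| exact: Dsm1].
rewrite !pdMl; try exact: Dsm1.
rewrite pdM; [| exact: Dg | exact: DTf].
rewrite /Tf pd_sum; last by move=> l _; apply: DblM; [exact: DH | exact: Dsm1].
congr (_ + _ - (_ + _ * _)); apply: eq_bigr => l _.
rewrite pdM; [| exact: DH | exact: Dsm1].
by rewrite pdH.
Qed.

Lemma ring1 (a b c e F G K : R) : F = G + K -> a + b - (c + e) + F = a - c + G + (b - e + K).
Proof. by move=> ->; ring. Qed.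
Lemma ring2 (c1 c2 c3 c4 a1 a2 a3 a4 : R) :
  (c1 + a1) * (c2 + a2) - (c3 + a3) * (c4 + a4) =
  (c1 * c2 - c3 * c4) + ((c1 + a1) * (c2 + a2) - (c3 + a3) * (c4 + a4) - (c1 * c2 - c3 * c4)).
Proof. by ring. Qed.

Lemma ricci_conf s x i j : smooth_on U s -> U x ->
  ricci (conf_metric g s) i j x = ricci g i j x +
  \sum_k (dA R n (Gx x) (Hx x) (dGx x) (Sx s x) (SSx s x) k k i j
         - dA R n (Gx x) (Hx x) (dGx x) (Sx s x) (SSx s x) j k i k
     + \sum_l ((christoffel g k k l x + Af s k k l x) * (christoffel g l i j x + Af s l i j x)
            - (christoffel g k j l x + Af s k j l x) * (christoffel g l i k x + Af s l i k x)
            - (christoffel g k k l x * christoffel g l i j x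
               - christoffel g k j l x * christoffel g l i k x))).
Proof.
move=> sms Ux.
have cc : forall a b c, christoffel (conf_metric g s) a b c x =
   christoffel g a b c x + Af s a b c x := fun a b c => christ_conf s x a b c sms Ux.
have pc : forall q a b c, pd q (christoffel (conf_metric g s) a b c) x =
   pd q (christoffel g a b c) x + pd q (Af s a b c) x.
  move=> q a b c.
  rewrite (@pd_near _ _ _ _ (fun y => christoffel g a b c y + Af s a b c y)).
    by rewrite pdD //; [exact: Dchrist | exact: DAf].
  by apply: filterS (nearU _ Ux) => y Uy; apply: christ_conf.
rewrite /ricci -big_split /=; apply: eq_bigr => k _.
rewrite !pc !pdAf //.
under eq_bigr do rewrite !cc.
apply: ring1; rewrite -big_split; apply: eq_bigr => l _; exact: ring2.
Qed.

Lemma ginvc s y a b : U y ->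
  ginv (conf_metric g s) y a b = (expR (2 * s y))^-1 * ginv g y a b.
Proof.
move=> Uy; rewrite /ginv /conf_metric invmxZ ?mxE //.
by rewrite unitmxZ ?gunit // unitfE gt_eqF // expR_gt0.
Qed.

Lemma dGS_ x : U x -> forall k i j, dGx x k i j = dGx x k j i.
Proof.
move=> Ux k i j; rewrite /dGx; apply: pd_near.
by apply: filterS (nearU _ Ux) => y Uy; apply: gS.
Qed.

Lemma gipE u w x : U x ->
  gip g x (grad g u x) (grad g w x) =
  \sum_k pd k u x * \sum_l ginv g x k l * pd l w x.
Proof.
move=> Ux; rewrite /gip /grad !mxE.
apply: eq_bigr => b _; rewrite !mxE; congr (_ * _).
transitivity (\sum_k g x k b * \sum_l ginv g x k l * pd l u x).
  by apply: eq_bigr => a _; rewrite mxE mulrC.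
exact: (@GT' R n (Gx x) (Hx x) (Sx u x) (fun i j => gS x i j Ux)
   (fun i j => HS_ x i j Ux) (fun i j => HG_ x i j Ux) b).
Qed.

Lemma ring5 (e h r d : R) : e * h * (r + d) = e * (h * r) + e * (h * d).
Proof. by ring. Qed.
Lemma ring6 (e sc a b X : R) : X = - a - b -> e * sc + e * X = e * (sc - a - b).
Proof. by move=> ->; ring. Qed.

Lemma scal_conf s x : smooth_on U s -> U x ->
  scal (conf_metric g s) x = (expR (2 * s x))^-1 * (scal g x
    - 2 * (n%:R - 1) * lap g s x
    - (n%:R - 1) * (n%:R - 2) * gip g x (grad g s x) (grad g s x)).
Proof.
move=> sms Ux.
have gc := fun a b => ginvc s x a b Ux.
have rc := fun a b => ricci_conf s x a b sms Ux.
rewrite /scal; under eq_bigr do under eq_bigr do rewrite gc rc ring5.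
rewrite sum2D; under eq_bigr do rewrite -mulr_sumr.
under [X in _ + X]eq_bigr do rewrite -mulr_sumr.
rewrite -!mulr_sumr; apply: ring6.
have key := @scal_alg R n (Gx x) (Hx x) (dGx x) (Sx s x) (SSx s x)
   (fun i j => gS x i j Ux) (fun i j => HS_ x i j Ux) (fun i j => HG_ x i j Ux) (dGS_ x Ux).
rewrite gipE // -mulNr.
exact: key.
Qed.

Lemma TgipE s u x : U x ->
  \sum_k Tf s k x * pd k u x = gip g x (grad g s x) (grad g u x).
Proof.
move=> Ux; rewrite gipE // /Tf.
under eq_bigr do rewrite mulr_suml.
under [RHS]eq_bigr do rewrite mulr_sumr.
rewrite [RHS]exchange_big; apply: eq_bigr => k _; apply: eq_bigr => l _.
by rewrite (HS_ x k l Ux) -mulrA mulrCA.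
Qed.

Lemma ring7 (e h a b c : R) : e * h * (a - (b + c)) = e * (h * (a - b)) - e * (h * c).
Proof. by ring. Qed.
Lemma ring8 (e X Y L P a : R) : X = L -> Y = (2 - a) * P ->
  e * X - e * Y = e * (L + (a - 2) * P).
Proof. by move=> -> ->; ring. Qed.

Lemma lap_conf s u x : smooth_on U s -> U x ->
  lap (conf_metric g s) u x = (expR (2 * s x))^-1 *
    (lap g u x + (n%:R - 2) * gip g x (grad g s x) (grad g u x)).
Proof.
move=> sms Ux.
have gc := fun a b => ginvc s x a b Ux.
have cc : forall a b c, christoffel (conf_metric g s) a b c x =
   christoffel g a b c x + Af s a b c x := fun a b c => christ_conf s x a b c sms Ux.
rewrite /lap; under eq_bigr do under eq_bigr do rewrite gc.
under eq_bigr do under eq_bigr do under eq_bigr do rewrite cc mulrDl.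
under eq_bigr do under eq_bigr do rewrite big_split /= ring7.
rewrite sum2B; under eq_bigr do rewrite -mulr_sumr.
under [X in _ - X]eq_bigr do rewrite -mulr_sumr.
rewrite -!mulr_sumr; apply: ring8; first by [].
rewrite -TgipE //.
exact: (@lapA R n (Gx x) (Hx x) (Sx s x) (fun i j => gS x i j Ux)
   (fun i j => HS_ x i j Ux) (fun i j => HG_ x i j Ux) (fun k => pd k u x)).
Qed.

Lemma grad_conf s u x : U x ->
  grad (conf_metric g s) u x = (expR (2 * s x))^-1 *: grad g u x.
Proof.
move=> Ux; apply/rowP => i; rewrite !mxE mulr_sumr.
by apply: eq_bigr => j _; rewrite ginvc // mulrA.
Qed.

Lemma gip_conf s x a b :
  gip (conf_metric g s) x a b = expR (2 * s x) * gip g x a b.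
Proof. by rewrite /gip /conf_metric -scalemxAr -scalemxAl mxE. Qed.
End M1.


Section M2.
Context {R : realType} {n : nat} (U : set 'rV[R]_n) (g : 'rV[R]_n -> 'M[R]_n).
Hypothesis oU : open U.
Hypothesis gm : is_metric_on U g.
Local Notation V := 'rV[R]_n.

Lemma ringA (E c a F fj : R) : E * (c * a) * F + E * fj = E * (c * a * F + fj).
Proof. by ring. Qed.

Lemma pd_ef (s f : V -> R) c j y : smooth_on U s -> smooth_on U f -> U y ->
  pd j (fun z => expR (c * s z) * f z) y = expR (c * s y) * (c * pd j s y * f y + pd j f y).
Proof.
move=> sms smf Uy.
rewrite pdM; first last.
- exact: (Dsm _ _ _ smf Uy).
- by apply: Dbl_diff; apply: diff_expRM; apply: (sms [::] y Uy).
by rewrite pd_expRM; [apply: ringA | apply: (sms [::] y Uy)].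
Qed.

Lemma ringB (E c Si Sj F fi fj SSij ffij : R) :
  E * (c * Si) * (c * Sj * F + fj) + E * (c * SSij * F + c * Sj * fi + ffij) =
  E * (c ^+ 2 * Si * Sj * F + c * Si * fj + c * Sj * fi + c * F * SSij + ffij).
Proof. by ring. Qed.

Lemma pd2_ef (s f : V -> R) c i j x : smooth_on U s -> smooth_on U f -> U x ->
  pd i (pd j (fun z => expR (c * s z) * f z)) x =
  expR (c * s x) * (c ^+ 2 * pd i s x * pd j s x * f x + c * pd i s x * pd j f x
     + c * pd j s x * pd i f x + c * f x * pd i (pd j s) x + pd i (pd j f) x).
Proof.
move=> sms smf Ux.
have De : Dbl (fun z => expR (c * s z)) x.
  by apply: Dbl_diff; apply: diff_expRM; apply: (sms [::] x Ux).
have D1 : Dbl (fun z => c * pd j s z) x by apply: DblM; [exact: Dbl_cst | exact: (Dsm1 _ _ _ _ sms Ux)].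
have D2 : Dbl (fun z => c * pd j s z * f z) x by apply: DblM => //; exact: (Dsm _ _ _ smf Ux).
rewrite (@pd_near _ _ _ _ (fun z => expR (c * s z) * (c * pd j s z * f z + pd j f z))); last first.
  by apply: filterS (nearU _ oU _ Ux) => z Uz; apply: pd_ef.
have D3 : Dbl (pd j f) x := Dsm1 _ _ _ _ smf Ux.
rewrite (@pdM _ _ i (fun z => expR (c * s z)) (fun z => c * pd j s z * f z + pd j f z) x De
   (DblD _ _ _ D2 D3)).
rewrite (pd_expRM _ _ _ _ (sms [::] x Ux : differentiable s x)).
rewrite (@pdD _ _ i (fun z => c * pd j s z * f z) (pd j f) x D2 D3).
rewrite (@pdM _ _ i (fun z => c * pd j s z) f x D1 (Dsm _ _ _ smf Ux)).
rewrite (@pdMl _ _ i c (pd j s) x (Dsm1 _ _ _ _ sms Ux)).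
exact: ringB.
Qed.

Lemma lap_ef (s f : V -> R) c x : smooth_on U s -> smooth_on U f -> U x ->
  lap g (fun z => expR (c * s z) * f z) x = expR (c * s x) *
   (c ^+ 2 * gip g x (grad g s x) (grad g s x) * f x
    + 2 * c * gip g x (grad g s x) (grad g f x) + c * f x * lap g s x + lap g f x).
Proof.
move=> sms smf Ux.
have p1 := fun i j => pd2_ef s f c i j x sms smf Ux.
have p2 := fun k => pd_ef s f c k x sms smf Ux.
rewrite (gipE _ _ gm s s x Ux) -(TgipE _ _ gm s f x Ux).
rewrite {1}/lap.
under eq_bigr do under eq_bigr do rewrite p1.
under eq_bigr => i _ do under eq_bigr => j _ do under eq_bigr do rewrite p2.
exact: (@lap_prod R n (Hx g x) (dGx g x) (Sx s x) (SSx s x)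
   (fun i j => HS_ _ _ gm x i j Ux) (expR (c * s x)) c (f x) (fun k => pd k f x)
   (fun i j => pd i (pd j f) x)).
Qed.

Lemma ringC (h E c a F b : R) : h * (E * (c * a * F + b)) = E * (c * F * (h * a)) + E * (h * b).
Proof. by ring. Qed.

Lemma grad_ef (s f : V -> R) c x : smooth_on U s -> smooth_on U f -> U x ->
  grad g (fun z => expR (c * s z) * f z) x =
  expR (c * s x) *: ((c * f x) *: grad g s x + grad g f x).
Proof.
move=> sms smf Ux.
have p2 := fun k => pd_ef s f c k x sms smf Ux.
apply/rowP => i; rewrite /grad !mxE.
under eq_bigr do rewrite p2 ringC.
by rewrite big_split /= -!mulr_sumr mulrDr.
Qed.

Lemma gipDl x (a b c : V) : gip g x (a + b) c = gip g x a c + gip g x b c.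
Proof. by rewrite /gip !mulmxDl mxE. Qed.
Lemma gipDr x (a b c : V) : gip g x a (b + c) = gip g x a b + gip g x a c.
Proof. by rewrite /gip linearD /= mulmxDr mxE. Qed.

Lemma part2 (v sigma s : V -> R) (m mu w : R) x : (3 <= n)%N ->
  smooth_on U v -> (forall y, U y -> 0 < v y) -> smooth_on U sigma ->
  smooth_on U s -> m != 1 - n%:R -> U x ->
  tDW (conf_metric g s) m mu (fun y => expR (s y) * v y) w
      (fun y => expR (w * s y) * sigma y) x
  = tractor_rescale g s (w - 1) (tDW g m mu v w sigma x) x.
Proof.
move=> n3 smv vpos smsig sms m1 Ux.
have gsym : (g x)^T = g x by have [_ h] := gm; case: (h x Ux).
have ev : (fun y => expR (s y) * v y) = (fun y => expR (1 * s y) * v y).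
  by apply: funext => y; rewrite mul1r.
rewrite ev.
have E2 : expR (2 * s x) = expR (s x) ^+ 2 by rewrite -expRM_natl.
have Ew1 : expR ((w - 1) * s x) = expR (w * s x) / expR (s x).
  by rewrite mulrBl mul1r expRB.
have Em : expR (- s x) = (expR (s x))^-1 by rewrite expRN.
have E1 : expR (1 * s x) = expR (s x) by rewrite mul1r.
have e0 : expR (s x) != 0 by rewrite gt_eqF // expR_gt0.
rewrite /tDW /tractor_rescale /tscale /=.
congr Tractor.
- rewrite Ew1; move: (expR (w * s x)) (expR (s x)) e0 => a b b0; by field.
- rewrite (grad_conf _ _ gm s _ x Ux) (grad_ef s sigma w x sms smsig Ux) E2 Ew1 Em.
  rewrite !scalerDr !scalerA addrC.
  by congr (_ *: _ + _ *: _); move: (expR (w * s x)) (expR (s x)) e0 => a b b0; field.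
rewrite /lapphi /JW /Rphi.
rewrite !(lap_conf _ _ gm s _ x sms Ux) (scal_conf _ _ oU gm s x sms Ux).
rewrite !(grad_conf _ _ gm s _ x Ux) !gip_conf.
rewrite (lap_ef s sigma w x sms smsig Ux) (lap_ef s v 1 x sms smv Ux).
rewrite (grad_ef s sigma w x sms smsig Ux) (grad_ef s v 1 x sms smv Ux).
rewrite !gipZl !gipZr !gipDl !gipDr !gipZl !gipZr.
rewrite (gip_sym g x (grad g v x) (grad g s x) gsym).
rewrite E2 Ew1 Em E1.
have v0 : v x != 0 by rewrite gt_eqF // vpos.
have mn : m + n%:R - 1 != 0.
  by apply: contra m1 => /eqP h; apply/eqP; lra.
move: (gip g x (grad g s x) (grad g s x)) (gip g x (grad g s x) (grad g sigma x))
  (gip g x (grad g s x) (grad g v x)) (gip g x (grad g v x) (grad g sigma x))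
  (gip g x (grad g v x) (grad g v x)) (lap g s x) (lap g sigma x) (lap g v x)
  (scal g x) (sigma x) (v x) v0 (expR (w * s x)) (expR (s x)) e0 mn.
move=> Pss Pss' Psv Pvs' Pvv Ls Lsig Lv Sc sg vv vv0 ew e1 e10 mn.
by field; rewrite vv0 e10 mn.
Qed.
End M2.

Theorem lemma5p9 (R : realType) (n : nat) (U : set 'rV[R]_n)
  (g : 'rV[R]_n -> 'M[R]_n) (v : 'rV[R]_n -> R) (m mu : R) :
  (3 <= n)%N -> open U -> is_metric_on U g ->
  smooth_on U v -> (forall x, U x -> 0 < v x) ->
  m != - n%:R -> m != 1 - n%:R -> m != 2 - n%:R ->
  forall (w : R) (sigma : 'rV[R]_n -> R), smooth_on U sigma ->
  (forall x, U x ->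
     tsub (tscale (n%:R + 2 * w - 2) (tDW g m mu v w sigma x))
          (tscale (m + n%:R + 2 * w - 2) (tD g w sigma x))
     = tscale (- m / v x *
          tmetric g x (tD g w sigma x)
            (tadd (Jtr g v x)
               (tscale ((mu - (m - 1) * tmetric g x (Jtr g v x) (Jtr g v x))
                        / (2 * (m + n%:R - 1) * v x)) tX))) tX)
  /\
  (forall s : 'rV[R]_n -> R, smooth_on U s -> forall x, U x ->
     tDW (conf_metric g s) m mu (fun y => expR (s y) * v y) w
         (fun y => expR (w * s y) * sigma y) x
     = tractor_rescale g s (w - 1) (tDW g m mu v w sigma x) x).
Proof.
move=> n3 oU gm smv vpos _ m1 _ w sigma smsig; split.
- move=> x Ux.
  have gsym : (g x)^T = g x by have [_ h] := gm; case: (h x Ux).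
  exact: (@part1 R n g v sigma m mu w x n3 gsym (vpos x Ux) m1).
- move=> s sms x Ux.
  exact: (@part2 R n U g oU gm v sigma s m mu w x n3 smv vpos smsig sms m1 Ux).
Qed.
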